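(* Let $n,m\ge 1$. Then for the Ramsey number $\mathcal{R}_{\mathcal{PDG}}$ with respect to the class $\mathcal{PDG}$ of all perfect divisor graphs, \[ \mathcal{R}_{\mathcal{PDG}}(n,m)=\mathcal{R}_{\mathcal{PO}}(n,m)=(n-1)(m-1)+1 . \]
   Context: Perfect divisor graph: for a commutative ring $R$ (with $1\ne0$), an integer $N\ge2$ and a set $S=\{m_1,\dots,m_N\}$ of $N$ pairwise coprime non-zero non-units of $R$ (coprime meaning $ra+sb=1$ for some $r,s$), with $m=m_1\cdots m_N$, a perfect divisor of $m$ w.r.t. $S$ is an element $d\ne m$ that is a product of distinct elements of $S$; $\mathrm{pdg}(S)$ is the simple undirected graph on the perfect divisors with distinct $a,b$ adjacent iff $a\mid b$ or $b\mid a$. $\mathcal{PDG}$ is the class of all such graphs. $\mathcal{PO}$ is the class of partial order graphs $G_A$ of posets $(A,\le)$ (vertex set $A$, distinct $a,b$ adjacent iff $a\le b$ or $b\le a$). For a class $\mathcal{C}$ of graphs, $\mathcal{R}_{\mathcal{C}}(n,m)$ is the minimal $r$ such that every induced subgraph with $r$ vertices of any graph in $\mathcal{C}$ contains either $K_n$ or an independent set of $m$ vertices. *)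

(* Defs.v *)
From mathcomp Require Import all_boot all_algebra.
Set Implicit Arguments. Unset Strict Implicit. Unset Printing Implicit Defensive.
Import GRing.Theory.
Local Open Scope ring_scope.

(* An induced subgraph on r vertices is given by an
   injective enumeration [f : 'I_r -> T] of r distinct vertices. *)
Definition ramsey_ok (T : Type) (V : T -> Prop) (adj : T -> T -> Prop)
    (n k r : nat) : Prop :=
  forall f : 'I_r -> T, injective f -> (forall i, V (f i)) ->
    (exists g : 'I_n -> 'I_r, injective g /\
       forall i j, i != j -> adj (f (g i)) (f (g j))) \/
    (exists g : 'I_k -> 'I_r, injective g /\
       forall i j, i != j -> ~ adj (f (g i)) (f (g j))).

Definition is_min_nat (P : nat -> Prop) (x : nat) : Prop :=
  P x /\ forall r, P r -> (x <= r)%N.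

Definition dvdR (R : comNzRingType) (a b : R) : Prop := exists c : R, b = a * c.
Definition unitR (R : comNzRingType) (a : R) : Prop := exists b : R, a * b = 1.
Definition coprimeR (R : comNzRingType) (a b : R) : Prop :=
  exists r s : R, r * a + s * b = 1.

(* Hypotheses on S = {m_1,...,m_N} (given as ms : 'I_N -> R). *)
Definition pdg_data (R : comNzRingType) (N : nat) (ms : 'I_N -> R) : Prop :=
  [/\ (2 <= N)%N,
      (forall i, ms i != 0),
      (forall i, ~ unitR (ms i)) &
      (forall i j, i != j -> coprimeR (ms i) (ms j))].

Definition perfect_divisor (R : comNzRingType) (N : nat) (ms : 'I_N -> R)
    (d : R) : Prop :=
  d <> \prod_(i < N) ms i /\
  exists A : {set 'I_N}, A != set0 /\ d = \prod_(i in A) ms i.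

Definition pdg_adj (R : comNzRingType) (a b : R) : Prop :=
  a <> b /\ (dvdR a b \/ dvdR b a).

Definition PDG_ramsey (n k r : nat) : Prop :=
  forall (R : comNzRingType) (N : nat) (ms : 'I_N -> R),
    pdg_data ms -> ramsey_ok (perfect_divisor ms) (@pdg_adj R) n k r.

Definition partial_order (A : Type) (le : A -> A -> Prop) : Prop :=
  [/\ (forall x, le x x),
      (forall x y, le x y -> le y x -> x = y) &
      (forall x y z, le x y -> le y z -> le x z)].

Definition po_adj (A : Type) (le : A -> A -> Prop) (a b : A) : Prop :=
  a <> b /\ (le a b \/ le b a).

Definition PO_ramsey (n k r : nat) : Prop :=
  forall (A : Type) (le : A -> A -> Prop),
    partial_order le -> ramsey_ok (fun _ : A => True) (po_adj le) n k r.

(* Main.v *)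
Require Import Defs.
From mathcomp Require Import all_boot all_algebra.
From Stdlib Require Import Classical ClassicalEpsilon.
From mathcomp Require Import ring zify.
Set Implicit Arguments. Unset Strict Implicit. Unset Printing Implicit Defensive.
Import GRing.Theory.

Section Ring.
Local Open Scope ring_scope.
Variable R : comNzRingType.

Lemma coprimeR_mul (a b c : R) : coprimeR a b -> coprimeR a c -> coprimeR a (b * c).
Proof.
move=> [r [s H1]] [r' [s' H2]].
exists (r * r' * a + r * s' * c + s * b * r'), (s * s').
have -> : 1 = (r * a + s * b) * (r' * a + s' * c) by rewrite H1 H2 mulr1.
ring.
Qed.

Lemma coprimeR_prod (a : R) (I : finType) (B : {set I}) (F : I -> R) :
  (forall i, i \in B -> coprimeR a (F i)) -> coprimeR a (\prod_(i in B) F i).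
Proof.
move=> H; apply: (big_ind (coprimeR a)) => //.
  by exists 0, 1; rewrite mul0r add0r mulr1.
exact: coprimeR_mul.
Qed.

Lemma dvd_prod_subset N (ms : 'I_N -> R) (A B : {set 'I_N}) :
  pdg_data ms -> dvdR (\prod_(i in A) ms i) (\prod_(i in B) ms i) -> A \subset B.
Proof.
case=> _ _ nu cop [c Hc]; apply/subsetP => i iA.
apply/negPn/negP => iB; apply: (nu i).
have [r [s Hrs]] : coprimeR (ms i) (\prod_(j in B) ms j).
  apply: coprimeR_prod => j jB; apply: cop.
  by apply/eqP => eij; rewrite eij jB in iB.
rewrite Hc (big_setD1 i iA) /= in Hrs.
exists (r + s * (\prod_(j in A :\ i) ms j) * c).
rewrite -[X in _ = X]Hrs; ring.
Qed.

Lemma subset_dvd_prod N (ms : 'I_N -> R) (A B : {set 'I_N}) :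
  A \subset B -> dvdR (\prod_(i in A) ms i) (\prod_(i in B) ms i).
Proof.
move=> sAB; exists (\prod_(i in B :\: A) ms i).
by rewrite (big_setID A) /= (setIidPr sAB).
Qed.

Lemma pd_antisym N (ms : 'I_N -> R) (x y : R) : pdg_data ms ->
  perfect_divisor ms x -> perfect_divisor ms y -> dvdR x y -> dvdR y x -> x = y.
Proof.
move=> D [_ [A [_ ->]]] [_ [B [_ ->]]] h1 h2.
have e : A = B by apply/eqP; rewrite eqEsubset (dvd_prod_subset D h1) (dvd_prod_subset D h2).
by rewrite e.
Qed.

Lemma dvdR_trans (x y z : R) : dvdR x y -> dvdR y z -> dvdR x z.
Proof. by move=> [c ->] [d ->]; exists (c * d); rewrite mulrA. Qed.
End Ring.

Section Mirsky.
Variable X : finType.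
Variable lt : rel X.
Hypothesis lt_irr : forall x, ~~ lt x x.
Hypothesis lt_tr : transitive lt.

Definition gt_ := fun a b => lt b a.

Definition chain (S : {set X}) k :=
  exists s : seq X, [/\ size s = k, all (mem S) s & sorted gt_ s].
Definition antichain (S : {set X}) k :=
  exists s : seq X, [/\ size s = k, uniq s, all (mem S) s &
     {in s &, forall x y, ~~ lt x y}].

Lemma mirsky m k (S : {set X}) : k * (m - 1) < #|S| -> chain S k.+1 \/ antichain S m.
Proof.
elim: k S => [|k IH] S HS.
  left; have [x xS] : exists x, x \in S.
    by apply/set0Pn; rewrite -card_gt0.
  by exists [:: x]; split => //=; rewrite xS.
case: (classic (antichain S m)) => [|nA]; [by right|left].
pose M := [set x in S | [forall y in S, ~~ lt x y]].
have cM : #|M| <= m - 1.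
  rewrite leqNgt; apply/negP => cM; apply: nA.
  exists (take m (enum M)); split.
  - by rewrite size_take cardE in cM *; case: ifP => //; lia.
  - exact/take_uniq/enum_uniq.
  - apply/allP => x /mem_take; rewrite mem_enum inE => /andP[] //.
  - move=> x y /mem_take; rewrite mem_enum inE => /andP[_ /forallP Hx] /mem_take.
    rewrite mem_enum inE => /andP[yS _].
    by have := Hx y; rewrite yS.
have cD : k * (m - 1) < #|S :\: M|.
  have := cardsID M S; have : #|S :&: M| <= #|M| by apply/subset_leq_card/subsetIr.
  rewrite mulSn in HS; lia.
case: (IH _ cD) => [[s [sz alls srt]]|[s [sz us alls nc]]]; last first.
  exfalso; apply: nA; exists s; split => //.
  by apply/allP => x /(allP alls) /setDP[].
case: s sz alls srt => // c s' sz /= /andP[cSM alls'] srt.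
move: cSM; rewrite !inE => /andP[cS' cS]; rewrite cS /= in cS'.
move: cS'; rewrite negb_forall_in => /existsP[y /andP[yS /negPn cy]].
exists [:: y, c & s']; split => /=.
- by move: sz => /= ->.
- rewrite yS cS /=; apply/allP => x /(allP alls') /setDP[] //.
- by rewrite /gt_ cy srt.
Qed.
End Mirsky.

Lemma ramsey_upper (T : Type) (V : T -> Prop) (adj lt : T -> T -> Prop) n m :
  (1 <= n)%N -> (1 <= m)%N ->
  (forall x, V x -> ~ lt x x) ->
  (forall x y z, V x -> V y -> V z -> lt x y -> lt y z -> lt x z) ->
  (forall x y, V x -> V y -> (adj x y <-> lt x y \/ lt y x)) ->
  ramsey_ok V adj n m ((n - 1) * (m - 1) + 1).
Proof.
move=> n1 m1 irr tr hadj f finj fV.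
set r := ((n - 1) * (m - 1) + 1)%N in f finj fV *.
pose ltb (i j : 'I_r) : bool :=
  if excluded_middle_informative (lt (f i) (f j)) then true else false.
have ltbP i j : ltb i j <-> lt (f i) (f j).
  rewrite /ltb; case: excluded_middle_informative => //.
have ltb_irr i : ~~ ltb i i by apply/negP => /ltbP; apply: irr.
have ltb_tr : transitive ltb.
  by move=> j i k /ltbP h1 /ltbP h2; apply/ltbP; apply: (tr _ _ _ (fV _) (fV _) (fV _) h1).
have cS : ((n - 1) * (m - 1) < #|[set: 'I_r]|)%N by rewrite cardsT card_ord /r addn1.
have := @mirsky _ ltb m (n - 1) _ cS.
rewrite (_ : (n - 1).+1 = n); last by lia.
case=> [[s [sz _ srt]]|[s [sz us _ nc]]].
- left; case: s sz srt => [|x0 s] sz srt; first by move: sz => /= ?; lia.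
  set s0 := x0 :: s in sz srt *.
  have H i j : (i < j < n)%N -> lt (f (nth x0 s0 j)) (f (nth x0 s0 i)).
    move=> /andP[ij jn]; apply/ltbP.
    by apply: (sorted_ltn_nth (leT := gt_ ltb)) => //; [move=> a b c h1 h2; exact: ltb_tr h2 h1| rewrite inE sz; lia| rewrite inE sz].
  exists (fun i => nth x0 s0 i); split.
  + move=> i j eij; case: (ltngtP i j) => [ij|ji|/val_inj //].
    * by exfalso; apply: (irr _ (fV (nth x0 s0 j))); rewrite -{2}eij; apply: H; rewrite ij /=.
    * by exfalso; apply: (irr _ (fV (nth x0 s0 i))); rewrite {2}eij; apply: H; rewrite ji /=.
  + move=> i j nij; apply/hadj => //.
    case: (ltngtP i j) => [ij|ji|/val_inj eij]; last by rewrite eij eqxx in nij.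
    * by right; apply: H; rewrite ij /=.
    * by left; apply: H; rewrite ji /=.
- right; case: s sz us nc => [|x0 s] sz us nc; first by move: sz => /= ?; lia.
  set s0 := x0 :: s in sz us nc *.
  exists (fun i => nth x0 s0 i); split.
  + move=> i j /eqP; rewrite nth_uniq ?sz // => /eqP; exact: val_inj.
  + move=> i j nij /hadj [] // /ltbP; apply/negP/nc; apply: mem_nth; rewrite sz //.
Qed.

Lemma no_clique n m r (g : 'I_n -> 'I_r) : (1 <= n)%N -> (r <= (n - 1) * (m - 1))%N ->
  injective g -> (forall i j, i != j -> g i %/ (n - 1) = g j %/ (n - 1)) -> False.
Proof.
move=> n1 hr ginj hc.
have r0 : (0 < r)%N by case: n n1 g {ginj hc} hr => // n' _ g _; apply: leq_ltn_trans (ltn_ord (g ord0)).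
have n2 : (0 < n - 1)%N by move: hr r0; case: (n - 1) => //; rewrite mul0n; lia.
pose h (i : 'I_n) : 'I_(n - 1) := Ordinal (ltn_pmod (g i) n2).
have hinj : injective h.
  move=> i j /(congr1 val) /= e; apply: ginj; apply: val_inj => /=.
  rewrite (divn_eq (g i) (n - 1)) (divn_eq (g j) (n - 1)) e.
  case: (eqVneq i j) => [->//|/hc ->] //.
by have := leq_card h hinj; rewrite !card_ord; lia.
Qed.

Lemma no_indep n m r (g : 'I_m -> 'I_r) : (1 <= m)%N -> (r <= (n - 1) * (m - 1))%N ->
  injective g -> (forall i j, i != j -> g i %/ (n - 1) <> g j %/ (n - 1)) -> False.
Proof.
move=> m1 hr ginj hc.
have r0 : (0 < r)%N by case: m m1 g {ginj hc} hr => // n' _ g _; apply: leq_ltn_trans (ltn_ord (g ord0)).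
have n2 : (0 < n - 1)%N by move: hr r0; case: (n - 1) => //; rewrite mul0n; lia.
have lt i : (g i %/ (n - 1) < m - 1)%N.
  by rewrite ltn_divLR // mulnC; apply: leq_trans hr.
pose h (i : 'I_m) : 'I_(m - 1) := Ordinal (lt i).
have hinj : injective h.
  move=> i j /(congr1 val) /= e; case: (eqVneq i j) => // /hc; contradiction.
by have := leq_card h hinj; rewrite !card_ord; lia.
Qed.

Lemma po_lower n m r : (1 <= n)%N -> (1 <= m)%N -> (r <= (n - 1) * (m - 1))%N ->
  ~ PO_ramsey n m r.
Proof.
move=> n1 m1 hr H.
pose le (x y : nat) := x %/ (n - 1) = y %/ (n - 1) /\ (x <= y)%N.
have po : partial_order le.
  split.
  - by move=> x; split.
  - by move=> x y [_ h1] [_ h2]; apply/eqP; rewrite eqn_leq h1 h2.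
  - by move=> x y z [e1 h1] [e2 h2]; split; [rewrite e1 e2 | apply: leq_trans h2].
have fi : injective (fun i : 'I_r => nat_of_ord i) by exact: val_inj.
case: (H nat le po (fun i => nat_of_ord i) fi (fun _ => I)).
- move=> [g [ginj hg]]; apply: (no_clique n1 hr ginj) => i j /hg [_ [[e _]|[e _]]] //.
- move=> [g [ginj hg]]; apply: (no_indep m1 hr ginj) => i j /[dup] nij /hg nadj e.
  apply: nadj; split.
    by move=> /val_inj /ginj eij; rewrite eij eqxx in nij.
  by case: (leqP (g i) (g j)) => h; [left | right; split; [|exact: ltnW]].
Qed.

Section PolyEx.
Import GRing.Theory Num.Theory.
Local Open Scope ring_scope.

Definition msX (N : nat) (i : 'I_N) : {poly rat} := 'X - (i%:R)%:P.

Lemma msX_data N : (2 <= N)%N -> pdg_data (@msX N).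
Proof.
move=> N2; split => //.
- by move=> i; rewrite -size_poly_eq0 /msX size_XsubC.
- move=> i [b hb].
  have b0 : b != 0 by apply/eqP => b0; move: hb; rewrite b0 mulr0 => /eqP; rewrite eq_sym oner_eq0.
  have := congr1 (fun p : {poly rat} => size p) hb; rewrite /=; rewrite size_mul ?size_poly1 /msX ?size_XsubC //.
    by move: b0; rewrite -size_poly_eq0; case: (size b).
  by rewrite -size_poly_eq0 size_XsubC.
- move=> i j nij.
  have d0 : ((j%:R - i%:R : rat) != 0).
    by rewrite subr_eq0 eqr_nat; apply: contra nij => /eqP e; apply/eqP/val_inj.
  exists ((j%:R - i%:R)^-1)%:P, (- ((j%:R - i%:R)^-1)%:P).
  rewrite /msX mulNr -mulrBr (_ : 'X - i%:R%:P - ('X - j%:R%:P) = (j%:R - i%:R)%:P).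
    by rewrite -polyCM mulVf.
  by rewrite polyCB; ring.
Qed.
End PolyEx.

Lemma pdg_lower n m r : (1 <= n)%N -> (1 <= m)%N -> (r <= (n - 1) * (m - 1))%N ->
  ~ PDG_ramsey n m r.
Proof.
move=> n1 m1 hr H.
set N := ((n - 1) * (m - 1) + 2)%N.
have N2 : (2 <= N)%N by rewrite /N; lia.
have D := msX_data N2.
have ixP (t : 'I_r) : (t < N)%N by have := ltn_ord t; rewrite /N; lia.
pose A (t : 'I_r) := [set i : 'I_N | (i %/ (n - 1) == t %/ (n - 1)) && (i <= t)%N].
pose d (t : 'I_r) := (\prod_(i in A t) msX i)%R.
have tA t : Ordinal (ixP t) \in A t by rewrite inE /= leqnn eqxx.
have F1 (a b : 'I_r) : dvdR (d a) (d b) -> (a %/ (n - 1) = b %/ (n - 1)) /\ (a <= b)%N.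
  move=> /(dvd_prod_subset D) /subsetP /(_ _ (tA a)); rewrite inE /= => /andP[/eqP -> ->].
  by [].
have F2 (a b : 'I_r) : (a %/ (n - 1) = b %/ (n - 1)) -> (a <= b)%N -> dvdR (d a) (d b).
  move=> e ab; apply: subset_dvd_prod; apply/subsetP => i; rewrite !inE => /andP[/eqP -> h].
  by rewrite e eqxx (leq_trans h ab).
have dinj : injective d.
  move=> a b e; apply: val_inj; apply/eqP; rewrite eqn_leq.
  have h1 : dvdR (d a) (d b) by exists 1%R; rewrite e mulr1.
  have h2 : dvdR (d b) (d a) by exists 1%R; rewrite e mulr1.
  by have [_ ->] := F1 a b h1; have [_ ->] := F1 b a h2.
have dV t : perfect_divisor (@msX N) (d t).
  split.
    move=> e.
    have : dvdR (\prod_(i in [set: 'I_N]) msX i)%R (d t).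
      by exists 1%R; rewrite e mulr1; apply: eq_bigl => i; rewrite inE.
    move=> /(dvd_prod_subset D) /subsetP.
    have lN : (N.-1 < N)%N by rewrite /N; lia.
    move=> /(_ (Ordinal lN)); rewrite !inE /= => /(_ isT) /andP[_].
    by have := ltn_ord t; rewrite /N; lia.
  by exists (A t); split => //; apply/set0Pn; exists (Ordinal (ixP t)).
case: (H _ N (@msX N) D d dinj dV).
- move=> [g [ginj hg]]; apply: (no_clique n1 hr ginj) => i j /hg [_ [/F1 [e _]|/F1 [e _]]] //.
- move=> [g [ginj hg]]; apply: (no_indep m1 hr ginj) => i j /[dup] nij /hg nadj e.
  apply: nadj; split.
    by move=> /dinj /ginj eij; rewrite eij eqxx in nij.
  case: (leqP (g i) (g j)) => h; [left; exact: F2 | right; apply: F2 => //; exact: ltnW].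
Qed.

Theorem theorem3p4 (n m : nat) : (1 <= n)%N -> (1 <= m)%N ->
  is_min_nat (PDG_ramsey n m) ((n - 1) * (m - 1) + 1)%N /\
  is_min_nat (PO_ramsey n m) ((n - 1) * (m - 1) + 1)%N.
Proof.
move=> n1 m1; split; split.
- move=> R N ms D.
  apply: (@ramsey_upper _ _ _ (fun x y => x <> y /\ dvdR x y)) => //.
  + by move=> x _ [].
  + move=> x y z Vx Vy Vz [nxy dxy] [nyz dyz]; split; last exact: dvdR_trans dyz.
    move=> exz; subst z; apply: nxy; exact: pd_antisym D Vx Vy dxy dyz.
  + move=> x y _ _; split.
      by case=> nxy [h|h]; [left|right]; split => // e; apply: nxy.
    by case=> [[nxy h]|[nxy h]]; (split; [move=> e; apply: nxy | ]); [ |left|by [] |right].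
- move=> r Hr; rewrite leqNgt; apply/negP => lt; apply: (pdg_lower n1 m1 _ Hr); lia.
- move=> A le [refl anti trans].
  apply: (@ramsey_upper _ _ _ (fun x y => x <> y /\ le x y)) => //.
  + by move=> x _ [].
  + move=> x y z _ _ _ [nxy dxy] [nyz dyz]; split; last exact: trans dyz.
    move=> exz; subst z; apply: nxy; exact: anti.
  + move=> x y _ _; split.
      by case=> nxy [h|h]; [left|right]; split => // e; apply: nxy.
    by case=> [[nxy h]|[nxy h]]; (split; [move=> e; apply: nxy | ]); [ |left|by [] |right].
- move=> r Hr; rewrite leqNgt; apply/negP => lt; apply: (po_lower n1 m1 _ Hr); lia.
Qed.
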